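(* Let $\gamma\in C^1((0,\infty))$ be positive, and assume one of the following: (a) $\gamma$ is non-increasing on $(0,\infty)$ and there is $A>0$ with $\int_s^{2s}\gamma(\eta)\,d\eta\le A$ for all $s\ge1$; (b) there are $b_0\in(0,1]$ and $s_1>0$ with $s\gamma'(s)+b_0\gamma(s)\le0$ for all $s\ge s_1$; (c) there are constants $l>0$ and $0<B_l\le A_l<\infty$ with $(1-l)A_l<B_l$ and $B_l=\liminf_{s\to\infty}s^l\gamma(s)\le\limsup_{s\to\infty}s^l\gamma(s)=A_l$. Then $\gamma$ satisfies (A3).
   Context: (A3): there is $b_0\in(0,1]$ such that for every $s_0>0$ there exists $K_0(s_0)>0$ (depending only on $\gamma$, $b_0$, $s_0$) with $s\gamma(s)+(b_0-1)\int_1^s\gamma(\eta)\,d\eta\le K_0(s_0)$ for all $s\ge s_0$. *)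

(* Defs.v *)
From Stdlib Require Import Reals.
From Coquelicot Require Import Coquelicot.
Open Scope R_scope.

Definition C1_pos (g : R -> R) : Prop :=
  forall x, 0 < x -> ex_derive g x /\ continuous (Derive g) x.

Definition liminf_infty (f : R -> R) : Rbar :=
  Lub_Rbar (fun y => exists M : R, y = Glb_Rbar (fun z => exists s, M <= s /\ z = f s)).

Definition limsup_infty (f : R -> R) : Rbar :=
  Glb_Rbar (fun y => exists M : R, y = Lub_Rbar (fun z => exists s, M <= s /\ z = f s)).

Definition A3 (g : R -> R) : Prop :=
  exists b0 : R, 0 < b0 <= 1 /\
    forall s0 : R, 0 < s0 -> exists K0 : R, 0 < K0 /\
      forall s : R, s0 <= s -> s * g s + (b0 - 1) * RInt g 1 s <= K0.

(* Main.v *)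
Require Import Defs.
From Stdlib Require Import Reals Lra Classical.
From Coquelicot Require Import Coquelicot.
Open Scope R_scope.


Section S.
Variable g : R -> R.
Hypothesis Hc1 : C1_pos g.

Lemma g_cont x : 0 < x -> continuous g x.
Proof. intros Hx. apply (@ex_derive_continuous R_AbsRing R_NormedModule). now apply Hc1. Qed.

Lemma g_exRInt a b : 0 < a -> 0 < b -> ex_RInt g a b.
Proof.
  intros Ha Hb. apply (@ex_RInt_continuous R_CompleteNormedModule). intros z Hz. apply g_cont.
  assert (0 < Rmin a b) by (apply Rmin_pos; lra). lra.
Qed.

Lemma RInt_deriv a x : 0 < a -> 0 < x -> is_derive (fun s => RInt g a s) x (g x).
Proof.
  intros Ha Hx. apply (@is_derive_RInt R_NormedModule g (fun s => RInt g a s) a x); [| now apply g_cont].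
  assert (He : 0 < x/2) by lra.
  exists (mkposreal _ He). intros y Hy.
  apply (@RInt_correct R_CompleteNormedModule). apply g_exRInt; auto.
  change (Rabs (y - x) < x/2) in Hy. apply Rabs_def2 in Hy. simpl in Hy. lra.
Qed.

Lemma decr (f df : R -> R) a : (forall x, a <= x -> is_derive f x (df x)) ->
  (forall x, a <= x -> df x <= 0) -> forall s, a <= s -> f s <= f a.
Proof.
  intros Hd Hn s Hs.
  destruct (MVT_gen f a s df) as [c [Hc Heq]].
  - intros x Hx. apply Hd. rewrite Rmin_left in Hx by lra. lra.
  - intros x Hx. rewrite Rmin_left in Hx by lra. apply continuity_pt_filterlim.
    apply (@ex_derive_continuous R_AbsRing R_NormedModule). eexists. apply Hd. lra.
  - rewrite Rmin_left in Hc by lra. rewrite Rmax_right in Hc by lra.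
    assert (df c <= 0) by (apply Hn; lra).
    assert (df c * (s - a) <= 0) by (apply Rmult_le_0_r; lra). lra.
Qed.

Definition h (b0 s : R) := s * g s + (b0 - 1) * RInt g 1 s.

Lemma h_deriv b0 x : 0 < x -> is_derive (h b0) x (x * Derive g x + b0 * g x).
Proof.
  intros Hx.
  assert (H: is_derive (h b0) x (plus (plus (mult 1 (g x)) (mult x (Derive g x))) (scal (b0-1) (g x)))).
  { unfold h. apply (is_derive_plus (fun s => s * g s) (fun s => (b0 - 1) * RInt g 1 s)).
    + apply (is_derive_mult (fun s => s) g).
      * apply (@is_derive_id R_AbsRing).
      * apply Derive_correct. now apply Hc1.
      * intros; apply Rmult_comm.
    + apply (is_derive_scal (fun s => RInt g 1 s)). apply RInt_deriv; lra. }
  replace (x * Derive g x + b0 * g x) with (plus (plus (mult 1 (g x)) (mult x (Derive g x))) (scal (b0-1) (g x))); auto.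
  unfold plus, mult, scal; simpl. unfold mult; simpl. ring.
Qed.

Lemma h_contpt b0 x : 0 < x -> continuity_pt (h b0) x.
Proof.
  intros Hx. apply continuity_pt_filterlim.
  apply (@ex_derive_continuous R_AbsRing R_NormedModule).
  eexists. now apply h_deriv.
Qed.

Lemma reduce b0 M K : 0 < b0 <= 1 -> 0 < M -> (forall s, M <= s -> h b0 s <= K) -> A3 g.
Proof.
  intros Hb HM HK. exists b0. split; auto. intros s0 Hs0.
  destruct (Rle_dec M s0) as [HMs|HMs].
  - exists (Rmax 1 K). split. { apply Rlt_le_trans with 1; [lra| apply Rmax_l]. }
    intros s Hs. apply Rle_trans with K; [apply HK; lra| apply Rmax_r].
  - destruct (continuity_ab_maj (h b0) s0 M) as [Mx [HMx1 HMx2]]; [lra| |].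
    { intros c Hc. apply h_contpt. lra. }
    exists (Rmax 1 (Rmax K (h b0 Mx))). split. { apply Rlt_le_trans with 1; [lra| apply Rmax_l]. }
    intros s Hs. destruct (Rle_dec s M).
    + apply Rle_trans with (h b0 Mx); [apply HMx1; lra|].
      eapply Rle_trans; [|apply Rmax_r]. apply Rmax_r.
    + apply Rle_trans with K; [apply HK; lra|].
      eapply Rle_trans; [|apply Rmax_r]. apply Rmax_l.
Qed.
End S.


Lemma limsup_ev f A e : limsup_infty f = Finite A -> 0 < A -> 0 < e ->
  exists M, forall s, M <= s -> f s < A + e.
Proof.
  intros HA HA0 He. unfold limsup_infty in HA.
  match type of HA with Glb_Rbar ?F = _ => set (FF := F) in HA; destruct (Glb_Rbar_correct FF) as [Hlb Hglb] end.
  rewrite HA in Hlb, Hglb.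
  assert (Hy : exists y, FF y /\ y < A + e).
  { apply NNPP. intros Hn.
    assert (Hb : is_lb_Rbar FF (Finite (A + e))).
    { intros x Fx. simpl. apply Rnot_lt_le. intros Hx. apply Hn. exists x. auto. }
    specialize (Hglb _ Hb). simpl in Hglb. lra. }
  destruct Hy as [y [[M HM] Hy]].
  exists M. intros s Hs.
  destruct (Lub_Rbar_correct (fun z => exists s, M <= s /\ z = f s)) as [Hub _].
  assert (HyA := Hlb y (ex_intro _ M HM)). simpl in HyA.
  specialize (Hub (f s) (ex_intro _ s (conj Hs eq_refl))).
  destruct (Lub_Rbar (fun z => exists s, M <= s /\ z = f s)) as [r| |] eqn:E;
    simpl in HM, Hub.
  - lra.
  - lra.
  - contradiction.
Qed.

Lemma liminf_ev f B e : liminf_infty f = Finite B -> 0 < e -> 0 < B - e ->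
  exists M, forall s, M <= s -> B - e < f s.
Proof.
  intros HB He HBe. unfold liminf_infty in HB.
  match type of HB with Lub_Rbar ?F = _ => set (FF := F) in HB; destruct (Lub_Rbar_correct FF) as [Hub Hlub] end.
  rewrite HB in Hub, Hlub.
  assert (Hy : exists y, FF y /\ B - e < y).
  { apply NNPP. intros Hn.
    assert (Hb : is_ub_Rbar FF (Finite (B - e))).
    { intros x Fx. simpl. apply Rnot_lt_le. intros Hx. apply Hn. exists x. auto. }
    specialize (Hlub _ Hb). simpl in Hlub. lra. }
  destruct Hy as [y [[M HM] Hy]].
  exists M. intros s Hs.
  destruct (Glb_Rbar_correct (fun z => exists s, M <= s /\ z = f s)) as [Hlb _].
  specialize (Hlb (f s) (ex_intro _ s (conj Hs eq_refl))).
  destruct (Glb_Rbar (fun z => exists s, M <= s /\ z = f s)) as [r| |] eqn:E;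
    simpl in HM, Hlb.
  - lra.
  - contradiction.
  - lra.
Qed.


Section T.
Variable g : R -> R.
Hypothesis Hc1 : C1_pos g.
Hypothesis Hpos : forall s, 0 < s -> 0 < g s.

Lemma Rpower_pos x y : 0 < Rpower x y.
Proof. unfold Rpower. apply exp_pos. Qed.

Lemma case_a : (forall x y, 0 < x -> x <= y -> g y <= g x) ->
  (exists A : R, 0 < A /\ forall s, 1 <= s -> RInt g s (2 * s) <= A) -> A3 g.
Proof.
  intros Hm [A [HA HI]]. apply (reduce g Hc1 1 2 (2 * A)); try lra.
  intros s Hs. unfold h. specialize (HI (s/2) ltac:(lra)).
  replace (2 * (s/2)) with s in HI by field.
  assert (Hle : RInt (fun _ => g s) (s/2) s <= RInt g (s/2) s).
  { apply RInt_le; [lra| apply ex_RInt_const | apply g_exRInt; auto; lra |].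
    intros x Hx. apply Hm; lra. }
  rewrite RInt_const in Hle. unfold scal in Hle; simpl in Hle. unfold mult in Hle; simpl in Hle.
  lra.
Qed.

Lemma case_b : (exists b0 s1 : R, 0 < b0 <= 1 /\ 0 < s1 /\
       forall s, s1 <= s -> s * Derive g s + b0 * g s <= 0) -> A3 g.
Proof.
  intros [b0 [s1 [Hb [Hs1 Hd]]]].
  apply (reduce g Hc1 b0 s1 (h g b0 s1)); auto.
  apply (decr (h g b0) (fun x => x * Derive g x + b0 * g x) s1).
  - intros x Hx. apply h_deriv; auto; lra.
  - auto.
Qed.

Lemma case_c1 l Al : 1 <= l -> 0 < Al ->
  limsup_infty (fun s => Rpower s l * g s) = Finite Al -> A3 g.
Proof.
  intros Hl HA Hls.
  destruct (limsup_ev _ Al 1 Hls HA ltac:(lra)) as [M HM].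
  apply (reduce g Hc1 1 (Rmax 1 M) (Al + 1)); [lra| apply Rlt_le_trans with 1; [lra|apply Rmax_l]|].
  intros s Hs. unfold h.
  assert (Hs1 : 1 <= s) by (eapply Rle_trans; [apply Rmax_l| exact Hs]).
  assert (HsM : M <= s) by (eapply Rle_trans; [apply Rmax_r| exact Hs]).
  specialize (HM s HsM).
  assert (E : s * g s = Rpower s (1 - l) * (Rpower s l * g s)).
  { rewrite <- Rmult_assoc, <- Rpower_plus. replace (1 - l + l) with 1 by ring.
    rewrite Rpower_1; lra. }
  assert (HP : Rpower s (1 - l) <= 1).
  { apply Rle_trans with (Rpower s 0); [apply Rle_Rpower; lra | rewrite Rpower_O; lra]. }
  assert (HP0 := Rpower_pos s (1 - l)).
  assert (Rpower s (1 - l) * (Rpower s l * g s) <= Rpower s (1 - l) * (Al + 1)).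
  { apply Rmult_le_compat_l; lra. }
  replace (1 - 1) with 0 by ring. rewrite Rmult_0_l, Rplus_0_r, E.
  assert (Rpower s (1 - l) * (Al + 1) <= 1 * (Al + 1)) by (apply Rmult_le_compat_r; lra).
  lra.
Qed.
End T.


Section U.
Variable g : R -> R.
Hypothesis Hc1 : C1_pos g.
Hypothesis Hpos : forall s, 0 < s -> 0 < g s.

Lemma case_c2 l Bl Al : 0 < l -> l < 1 -> 0 < Bl -> Bl <= Al -> (1 - l) * Al < Bl ->
  liminf_infty (fun s => Rpower s l * g s) = Finite Bl ->
  limsup_infty (fun s => Rpower s l * g s) = Finite Al -> A3 g.
Proof.
  intros Hl0 Hl1 HB HBA Hc Hli Hls.
  set (e := (Bl - (1 - l) * Al) / (2 * (2 - l))).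
  assert (He : 0 < e) by (unfold e; apply Rdiv_lt_0_compat; lra).
  assert (He2 : e * (2 * (2 - l)) = Bl - (1 - l) * Al) by (unfold e; field; lra).
  assert (HBe : 0 < Bl - e) by nra.
  assert (Hkey : (1 - l) * (Al + e) < Bl - e) by nra.
  set (d := (1 - l) * (Al + e) / (Bl - e)).
  assert (Hd0 : 0 < d) by (unfold d; apply Rdiv_lt_0_compat; nra).
  assert (Hd1 : d < 1).
  { unfold d. apply (Rmult_lt_reg_r (Bl - e)); auto. field_simplify; lra. }
  set (c := (Bl - e) / (1 - l)).
  assert (Hdc : d * c = Al + e) by (unfold d, c; field; lra).
  assert (Hc1l : c * (1 - l) = Bl - e) by (unfold c; field; lra).
  destruct (liminf_ev _ Bl e Hli He HBe) as [M1 HM1].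
  destruct (limsup_ev _ Al e Hls ltac:(lra) He) as [M2 HM2].
  set (M := Rmax 1 (Rmax M1 M2)).
  assert (HM1' : 1 <= M) by apply Rmax_l.
  assert (HMM1 : M1 <= M) by (eapply Rle_trans; [|apply Rmax_r]; apply Rmax_l).
  assert (HMM2 : M2 <= M) by (eapply Rle_trans; [|apply Rmax_r]; apply Rmax_r).
  set (psi := fun s => c * Rpower s (1 - l) - RInt g M s).
  assert (Hpsi : forall s, M <= s -> psi s <= psi M).
  { apply (decr psi (fun x => minus (scal c ((1 - l) * Rpower x (1 - l - 1))) (g x)) M).
    - intros x Hx. unfold psi.
      apply (is_derive_minus (fun s => c * Rpower s (1 - l)) (fun s => RInt g M s)).
      + apply (is_derive_scal (fun s => Rpower s (1 - l))).
        apply is_derive_Reals. apply derivable_pt_lim_power. lra.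
      + apply (RInt_deriv g Hc1); lra.
    - intros x Hx. unfold minus, plus, opp, scal; simpl. unfold mult; simpl.
      replace (1 - l - 1) with (- l) by ring.
      specialize (HM1 x ltac:(lra)).
      assert (Hinv : Rpower x (- l) * Rpower x l = 1).
      { rewrite <- Rpower_plus. replace (- l + l) with 0 by ring. apply Rpower_O; lra. }
      assert (Hp := Rpower_pos x (- l)).
      assert (Rpower x (- l) * (Bl - e) <= Rpower x (-l) * (Rpower x l * g x)) by (apply Rmult_le_compat_l; lra).
      rewrite <- Rmult_assoc, Hinv in H. nra. }
  apply (reduce g Hc1 (1 - d) M ((Al + e) * Rpower M (1 - l) - d * RInt g 1 M)); [lra|lra|].
  intros s Hs. unfold h.
  specialize (Hpsi s Hs). unfold psi in Hpsi. rewrite RInt_point in Hpsi.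
  unfold zero in Hpsi; simpl in Hpsi.
  assert (Hch : RInt g 1 s = RInt g 1 M + RInt g M s).
  { rewrite <- (RInt_Chasles g 1 M s); [reflexivity| apply g_exRInt; auto; lra | apply g_exRInt; auto; lra]. }
  rewrite Hch.
  specialize (HM2 s ltac:(lra)).
  assert (E : s * g s = Rpower s (1 - l) * (Rpower s l * g s)).
  { rewrite <- Rmult_assoc, <- Rpower_plus. replace (1 - l + l) with 1 by ring.
    rewrite Rpower_1; lra. }
  assert (HP0 := Rpower_pos s (1 - l)).
  assert (Rpower s (1 - l) * (Rpower s l * g s) <= Rpower s (1 - l) * (Al + e)).
  { apply Rmult_le_compat_l; lra. }
  assert (d * (c * Rpower s (1 - l) - RInt g M s) <= d * (c * Rpower M (1 - l) - 0)).
  { apply Rmult_le_compat_l; lra. }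
  replace (1 - d - 1) with (- d) by ring.
  assert (d * (c * Rpower s (1 - l)) = (Al + e) * Rpower s (1 - l)) by (rewrite <- Hdc; ring).
  assert (d * (c * Rpower M (1 - l)) = (Al + e) * Rpower M (1 - l)) by (rewrite <- Hdc; ring).
  nra.
Qed.
End U.

Theorem lemma2p6 (g : R -> R)
  (Hc1 : C1_pos g) (Hpos : forall s, 0 < s -> 0 < g s) :
  ( (* (a) *)
    ((forall x y, 0 < x -> x <= y -> g y <= g x) /\
     exists A : R, 0 < A /\ forall s, 1 <= s -> RInt g s (2 * s) <= A)
  \/ (* (b) *)
    (exists b0 s1 : R, 0 < b0 <= 1 /\ 0 < s1 /\
       forall s, s1 <= s -> s * Derive g s + b0 * g s <= 0)
  \/ (* (c) *)
    (exists l Bl Al : R, 0 < l /\ 0 < Bl /\ Bl <= Al /\ (1 - l) * Al < Bl /\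
       liminf_infty (fun s => Rpower s l * g s) = Finite Bl /\
       limsup_infty (fun s => Rpower s l * g s) = Finite Al) ) ->
  A3 g.
Proof.
  intros [Ha | [Hb | Hc]].
  - destruct Ha as [Hm HA]. exact (case_a g Hc1 Hm HA).
  - exact (case_b g Hc1 Hb).
  - destruct Hc as [l [Bl [Al [Hl [HB [HBA [Hc [Hli Hls]]]]]]]].
    destruct (Rlt_le_dec l 1) as [Hl1|Hl1].
    + exact (case_c2 g Hc1 l Bl Al Hl Hl1 HB HBA Hc Hli Hls).
    + apply (case_c1 g Hc1 l Al Hl1); [lra | exact Hls].
Qed.
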